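(* Let $m\geq 1$ and $n\geq 2$ be integers, let $K$ be an algebraically closed field, and let $p(x_1,\ldots,x_m)\in K\langle x_1,\ldots,x_m\rangle$ be a polynomial with zero constant term. For $k\geq 1$ and $1\leq i_1,\ldots,i_k\leq m$ let $p_{i_1\cdots i_k}$ be the commutative polynomial in $m(k+1)$ variables defined in the context. Suppose that $\mathrm{ord}(p)=r$ with $1\leq r\leq n-1$. Then: (i) $p(K)=\{0\}$, i.e. $p(c_1,\ldots,c_m)=0$ for all $c_1,\ldots,c_m\in K$; (ii) if $r\geq 2$, then $p_{i_1\cdots i_k}$ vanishes at every point of $K^{m(k+1)}$ for all $1\leq i_1,\ldots,i_k\leq m$ and all $k=1,\ldots,r-1$; consequently $p(T_n(K))\subseteq T_n(K)^{(r-1)}$; (iii) there exist $1\leq i_1,\ldots,i_r\leq m$ such that $p_{i_1\cdots i_r}$ does not vanish at some point of $K^{m(r+1)}$.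
   Context: $T_n(K)$ denotes the algebra of $n\times n$ upper triangular matrices over $K$; for $t\geq 0$, $T_n(K)^{(t)}$ is the set of upper triangular matrices whose $(i,j)$ entries vanish whenever $j-i\leq t$. For a $K$-algebra $\mathcal{A}$ let $\mathcal{T}(\mathcal{A})$ be its set of polynomial identities; with $T_1(K)=K$, the order $\mathrm{ord}(p)$ is the least $k\geq 1$ with $p\in\mathcal{T}(T_k(K))$ and $p\notin\mathcal{T}(T_{k+1}(K))$, and $\mathrm{ord}(p)=0$ if $p\notin\mathcal{T}(K)$. The polynomials $p_{i_1\cdots i_k}$: writing $p=\sum_w\lambda_w w$ as a linear combination of nonempty words $w$ in $x_1,\ldots,x_m$, for $\bar z_1,\ldots,\bar z_{k+1}\in K^m$ set $p_{i_1\cdots i_k}(\bar z_1,\ldots,\bar z_{k+1})=\sum_w\lambda_w\sum w_1(\bar z_1)w_2(\bar z_2)\cdots w_{k+1}(\bar z_{k+1})$, where the inner sum runs over all factorizations $w=w_1x_{i_1}w_2x_{i_2}\cdots w_kx_{i_k}w_{k+1}$ with $w_1,\ldots,w_{k+1}$ (possibly empty) words, $w_j(\bar z)$ denotes the value of the monomial $w_j$ at the commuting scalars $\bar z\in K^m$, and the empty word evaluates to $1$. Equivalently, these are the polynomials such that for all $u_i=(a^{(i)}_{jk})\in T_n(K)$ the $(s,t)$ entry ($s<t$) of $p(u_1,\ldots,u_m)$ equals $\sum_{k=1}^{t-s}\sum_{s=j_1<\cdots<j_{k+1}=t,\ 1\le i_1,\ldots,i_k\le m} p_{i_1\cdots i_k}(\bar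 a_{j_1j_1},\ldots,\bar a_{j_{k+1}j_{k+1}})a^{(i_1)}_{j_1j_2}\cdots a^{(i_k)}_{j_kj_{k+1}}$, with $\bar a_{jj}=(a^{(1)}_{jj},\ldots,a^{(m)}_{jj})$. *)

(* Defs.v *)
From HB Require Import structures.
From mathcomp Require Import all_boot all_order all_algebra.
Set Implicit Arguments. Unset Strict Implicit. Unset Printing Implicit Defensive.
Import Order.TTheory GRing.Theory Num.Theory.
Local Open Scope ring_scope.

(* A noncommutative polynomial in x_1..x_m over K is represented as a finite
   list of (word, coefficient) pairs; a word is a sequence of variable indices
   in 'I_m (index i stands for x_{i+1}).  The polynomial is the sum of the
   coefficient times the word. *)
Definition ncpoly (K : Type) (m : nat) := seq (seq 'I_m * K).

Definition zero_const_term (K : Type) (m : nat) (p : ncpoly K m) : Prop :=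
  forall wc, wc \in map fst p -> wc != [::].

Definition word_mx (K : fieldType) (m n : nat) (w : seq 'I_m)
  (A : 'I_m -> 'M[K]_n) : 'M[K]_n :=
  foldr (fun i M => A i *m M) 1%:M w.

Definition eval_mx (K : fieldType) (m n : nat) (p : ncpoly K m)
  (A : 'I_m -> 'M[K]_n) : 'M[K]_n :=
  \sum_(wc <- p) wc.2 *: word_mx wc.1 A.

Definition word_sc (K : fieldType) (m : nat) (w : seq 'I_m) (c : 'I_m -> K) : K :=
  \prod_(i <- w) c i.

Definition eval_sc (K : fieldType) (m : nat) (p : ncpoly K m) (c : 'I_m -> K) : K :=
  \sum_(wc <- p) wc.2 * word_sc wc.1 c.

Definition upper_tri (K : fieldType) (n : nat) (A : 'M[K]_n) : Prop :=
  forall i j : 'I_n, (j < i)%N -> A i j = 0.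

Definition in_Tn_t (K : fieldType) (n t : nat) (A : 'M[K]_n) : Prop :=
  upper_tri A /\ forall i j : 'I_n, (j <= i + t)%N -> A i j = 0.

Definition is_PI_T (K : fieldType) (m : nat) (p : ncpoly K m) (k : nat) : Prop :=
  forall A : 'I_m -> 'M[K]_k, (forall i, upper_tri (A i)) -> eval_mx p A = 0.

Definition has_ord (K : fieldType) (m : nat) (p : ncpoly K m) (r : nat) : Prop :=
  (r = 0%N /\ ~ is_PI_T p 1)
  \/ [/\ (1 <= r)%N, is_PI_T p r, ~ is_PI_T p r.+1 &
        forall k, (1 <= k < r)%N -> ~ (is_PI_T p k /\ ~ is_PI_T p k.+1)].

(* Sum over factorizations w = w_1 x_{i_1} w_2 ... x_{i_k} w_{k+1} of
   w_1(z 0) w_2(z 1) ... w_{k+1}(z k). *)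
Fixpoint fact_sum (K : fieldType) (m : nat) (idx : seq 'I_m)
  (z : nat -> 'I_m -> K) (w : seq 'I_m) {struct w} : K :=
  match w with
  | [::] => if idx is [::] then 1 else 0
  | a :: w' =>
      z 0%N a * fact_sum idx z w' +
      (match idx with
       | i :: idx' => (a == i)%:R * fact_sum idx' (fun t => z t.+1) w'
       | [::] => 0
       end)
  end.

Definition pcoef (K : fieldType) (m k : nat) (p : ncpoly K m)
  (idx : k.-tuple 'I_m) (z : 'I_k.+1 -> 'I_m -> K) : K :=
  \sum_(wc <- p) wc.2 * fact_sum idx (fun t => z (inord t)) wc.1.

(* Main.v *)
Require Import Defs.
From HB Require Import structures.
From mathcomp Require Import all_boot all_order all_algebra.
From mathcomp Require Import zify.
From Stdlib Require Import Classical.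
Set Implicit Arguments. Unset Strict Implicit. Unset Printing Implicit Defensive.
Import Order.TTheory GRing.Theory Num.Theory.
Local Open Scope ring_scope.

Section Aux.
Variable K : fieldType.
Variable m : nat.
Implicit Types (p q : ncpoly K m) (w : seq 'I_m).

Definition Fp p (idx : seq 'I_m) (zz : nat -> 'I_m -> K) : K :=
  \sum_(wc <- p) wc.2 * fact_sum idx zz wc.1.

Definition sc (c : K) q : ncpoly K m := [seq (x.1, c * x.2) | x <- q].

Fixpoint Dw (c : 'I_m -> K) (a : 'I_m) w : ncpoly K m :=
  match w with
  | [::] => [::]
  | b :: w' => sc (c b) (Dw c a w') ++ (if b == a then [:: (w', 1)] else [::])
  end.

Fixpoint Dp (c : 'I_m -> K) (a : 'I_m) p : ncpoly K m :=
  match p with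
  | [::] => [::]
  | wc :: p' => sc wc.2 (Dw c a wc.1) ++ Dp c a p'
  end.

Lemma Fp_cat p q idx zz : Fp (p ++ q) idx zz = Fp p idx zz + Fp q idx zz.
Proof. by rewrite /Fp big_cat. Qed.

Lemma Fp_sc c q idx zz : Fp (sc c q) idx zz = c * Fp q idx zz.
Proof. by rewrite /Fp big_map mulr_sumr; apply: eq_bigr => x _ /=; rewrite mulrA. Qed.

Lemma fact_sum_Dw a idx z w :
  fact_sum (a :: idx) z w = Fp (Dw (z 0%N) a w) idx (fun t => z t.+1).
Proof.
elim: w => [|b w IH]; first by rewrite /Fp big_nil.
rewrite /= Fp_cat Fp_sc -IH; congr (_ + _).
case: (eqVneq b a) => [_|H]; last by rewrite /Fp big_nil mul0r.
by rewrite /Fp big_cons big_nil /= !mul1r addr0.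
Qed.

Lemma Fp_D p a idx z :
  Fp (Dp (z 0%N) a p) idx (fun t => z t.+1) = Fp p (a :: idx) z.
Proof.
elim: p => [|wc p IH]; first by rewrite /Fp !big_nil.
by rewrite /= Fp_cat Fp_sc IH -fact_sum_Dw [Fp (wc :: p) _ _]/Fp big_cons.
Qed.

Lemma Fp_nil p z : Fp p [::] z = eval_sc p (z 0%N).
Proof.
rewrite /Fp /eval_sc; apply: eq_bigr => wc _; congr (_ * _).
elim: wc.1 => [|b w IH] /=; first by rewrite /word_sc big_nil.
by rewrite /word_sc big_cons -/(word_sc _ _) IH addr0.
Qed.

Lemma fact_sum_ext idx z z' w :
  (forall t, (t <= size idx)%N -> z t = z' t) -> @fact_sum K m idx z w = fact_sum idx z' w.
Proof.
elim: w idx z z' => [|b w IH] idx z z' H //=.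
rewrite (H 0%N) // (IH idx z z') //; congr (_ + _).
case: idx H => [|i idx] H //=; congr (_ * _); apply: IH => t Ht; apply: H => /=.
by rewrite ltnS.
Qed.

Lemma Fp_ext p idx z z' :
  (forall t, (t <= size idx)%N -> z t = z' t) -> Fp p idx z = Fp p idx z'.
Proof. by move=> H; apply: eq_bigr => wc _; rewrite (fact_sum_ext _ H). Qed.


Variable N : nat.
Implicit Types (A : 'I_m -> 'M[K]_N).

Lemma eval_entry p A s t :
  eval_mx p A s t = \sum_(wc <- p) wc.2 * word_mx wc.1 A s t.
Proof. by rewrite /eval_mx summxE; apply: eq_bigr => wc _; rewrite mxE. Qed.

Lemma mul_ut (B C : 'M[K]_N) : upper_tri B -> upper_tri C -> upper_tri (B *m C).
Proof.
move=> HB HC i j Hji; rewrite mxE big1 // => k _.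
case: (ltnP k i) => Hk; first by rewrite HB // mul0r.
by rewrite HC ?mulr0 //; apply: leq_trans Hji Hk.
Qed.

Lemma word_ut w A : (forall i, upper_tri (A i)) -> upper_tri (word_mx w A).
Proof.
move=> HA; elim: w => [|b w IH] /=.
  by move=> i j Hji; rewrite mxE; case: eqVneq => // Hij; rewrite Hij ltnn in Hji.
exact: mul_ut.
Qed.

Lemma eval_ut p A : (forall i, upper_tri (A i)) -> upper_tri (eval_mx p A).
Proof.
move=> HA i j Hji; rewrite eval_entry big1 // => wc _.
by rewrite word_ut ?mulr0.
Qed.

Lemma word_diag w A s : (forall i, upper_tri (A i)) ->
  word_mx w A s s = word_sc w (fun i => A i s s).
Proof.
move=> HA; elim: w => [|b w IH] /=; first by rewrite mxE eqxx /word_sc big_nil.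
rewrite mxE (bigD1 s) //= IH /word_sc big_cons -/(word_sc _ _) big1 ?addr0 // => j Hj.
case: (ltngtP j s) => Hjs.
- by rewrite HA // mul0r.
- by rewrite (word_ut _ HA) // mulr0.
- by move: Hj; rewrite (val_inj Hjs) eqxx.
Qed.

Lemma eval_diag p A s : (forall i, upper_tri (A i)) ->
  eval_mx p A s s = eval_sc p (fun i => A i s s).
Proof.
by move=> HA; rewrite eval_entry /eval_sc; apply: eq_bigr => wc _; rewrite word_diag.
Qed.

Lemma eval_cat p q A : eval_mx (p ++ q) A = eval_mx p A + eval_mx q A.
Proof. by rewrite /eval_mx big_cat. Qed.

Lemma eval_sc_ c q A : eval_mx (sc c q) A = c *: eval_mx q A.
Proof. by rewrite /eval_mx big_map scaler_sumr; apply: eq_bigr => x _ /=; rewrite scalerA. Qed.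

Lemma word_off w A (s t : 'I_N) : s != t ->
  word_mx w A s t = \sum_a \sum_(j | j != s)
     A a s j * eval_mx (Dw (fun i => A i s s) a w) A j t.
Proof.
move=> Hst; elim: w => [|b w IH] /=.
  rewrite mxE (negPf Hst) /= big1 // => a _; rewrite big1 // => j _.
  by rewrite /eval_mx big_nil mxE mulr0.
rewrite mxE (bigD1 s) //= IH mulr_sumr; apply/esym.
under eq_bigr => a _ do under eq_bigr => j _ do
  rewrite eval_cat eval_sc_ !mxE mulrDr mulrCA.
under eq_bigr => a _ do rewrite big_split /= -mulr_sumr.
rewrite big_split /=; congr (_ + _).
rewrite (bigD1 b) //= [X in _ + X]big1 ?addr0; last first.
  move=> a Hab; rewrite big1 // => j _.
  by rewrite eq_sym (negPf Hab) /eval_mx big_nil mxE mulr0.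
by apply: eq_bigr => j _; rewrite eqxx /eval_mx big_cons big_nil addr0 scale1r.
Qed.

Lemma eval_off p A (s t : 'I_N) : s != t ->
  eval_mx p A s t = \sum_a \sum_(j | j != s)
     A a s j * eval_mx (Dp (fun i => A i s s) a p) A j t.
Proof.
move=> Hst; elim: p => [|wc p IH] /=.
  rewrite /eval_mx big_nil mxE big1 // => a _; rewrite big1 // => j _.
  by rewrite mxE mulr0.
rewrite /eval_mx big_cons -/(eval_mx _ _) !mxE IH (word_off _ _ Hst) mulr_sumr -big_split.
apply: eq_bigr => a _; rewrite mulr_sumr -big_split; apply: eq_bigr => j _ /=.
by rewrite -/(eval_mx _ _) eval_cat eval_sc_ !mxE mulrDr mulrCA.
Qed.


Lemma vanish R p A : (forall i, upper_tri (A i)) ->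
  (forall idx zz, (size idx <= R)%N -> Fp p idx zz = 0) ->
  forall s t : 'I_N, (s <= t)%N -> (t <= s + R)%N -> eval_mx p A s t = 0.
Proof.
move=> HA; elim: R p => [|R IH] p Hp s t Hst HtR.
  have -> : t = s by apply: val_inj => /=; lia.
  by rewrite eval_diag // -(Fp_nil p (fun _ => fun i => A i s s)) Hp.
case: (eqVneq s t) => [<-|Hne].
  by rewrite eval_diag // -(Fp_nil p (fun _ => fun i => A i s s)) Hp.
rewrite eval_off // big1 // => a _; rewrite big1 // => j Hj.
case: (ltngtP j s) => Hjs.
- by rewrite HA // mul0r.
- case: (leqP j t) => Hjt; last by rewrite eval_ut // mulr0.
  rewrite IH ?mulr0 //; last by lia.
  move=> idx zz Hsz.
  have := Fp_D p a idx (fun t => if t is t'.+1 then zz t' else (fun i => A i s s)).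
  move=> /= ->; apply: Hp => /=; lia.
- by move: Hj; rewrite (val_inj Hjs) eqxx.
Qed.

Section Bidiag.
Variables (k : nat) (idx : seq 'I_m) (zz : nat -> 'I_m -> K).
Hypothesis Hsz : size idx = k.

Definition Bmx (a : 'I_m) : 'M[K]_N := \matrix_(i, j)
  (if i == j then zz i a
   else if (j == i.+1 :> nat) && (i < k)%N then (a == nth a idx i)%:R else 0).

Lemma Bmx_ut a : upper_tri (Bmx a).
Proof.
move=> i j Hji; rewrite mxE.
case: eqVneq => [Hij|_]; first by rewrite Hij ltnn in Hji.
by have -> : (j == i.+1 :> nat) = false by apply/eqP; lia.
Qed.

Lemma word_B w (s kk : 'I_N) : nat_of_ord kk = k -> (s <= k)%N ->
  word_mx w Bmx s kk = fact_sum (drop s idx) (fun t => zz (s + t)%N) w.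
Proof.
move=> Hkk; elim: w s => [|b w IH] s Hs /=.
  rewrite mxE; case E: (drop s idx) => [|x d]; have := size_drop s idx;
    rewrite E Hsz /= => H.
    by have -> : s == kk by apply/eqP/val_inj; rewrite /= Hkk; lia.
  by have -> : (s == kk) = false by apply/eqP => Hs'; rewrite Hs' Hkk subnn in H.
rewrite mxE (bigD1 s) //= IH // mxE eqxx addn0.
case: (ltnP s k) => Hsk.
  have Hs1 : (s.+1 < N)%N by have := ltn_ord kk; lia.
  rewrite (drop_nth b) ?Hsz //= (bigD1 (Ordinal Hs1)) /=; last by
    apply/eqP => /(f_equal val) /=; lia.
  rewrite IH //= mxE.
  have -> : (s == Ordinal Hs1) = false by apply/eqP => /(f_equal val) /=; lia.
  rewrite eqxx Hsk /= big1 ?addr0; last first.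
    move=> j /andP [Hj1 Hj2]; rewrite mxE eq_sym (negPf Hj1).
    have -> : (j == s.+1 :> nat) = false.
      by apply/negP => /eqP Hj; move: Hj2; rewrite eqE /= Hj eqxx.
    by rewrite mul0r.
  congr (_ + _); congr (_ * _); apply: fact_sum_ext => t _; congr zz; lia.
have Hsk' : s = k :> nat by lia.
rewrite drop_oversize ?Hsz //= big1 ?addr0 ?addr0 //.
move=> j Hj; rewrite mxE eq_sym (negPf Hj).
have -> : (s < k)%N = false by lia.
by rewrite andbF mul0r.
Qed.

End Bidiag.

End Aux.

Lemma Fp_small (K : fieldType) (m r : nat) (p : ncpoly K m) idx zz :
  is_PI_T p r -> (size idx < r)%N -> Fp p idx zz = 0.
Proof.
move=> HPI Hlt.
have H0 : (0 < r)%N by lia.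
have := HPI (Bmx r (size idx) idx zz) (Bmx_ut zz (erefl _)).
move=> /matrixP /(_ (Ordinal H0) (Ordinal Hlt)); rewrite mxE eval_entry => <-.
apply: eq_bigr => wc _; rewrite (word_B zz (erefl _)) //= drop0.
by congr (_ * _); apply: fact_sum_ext => t _.
Qed.

Theorem lemma3p4 (K : closedFieldType) (m n r : nat) (p : ncpoly K m) :
  (1 <= m)%N -> (2 <= n)%N -> zero_const_term p ->
  has_ord p r -> (1 <= r)%N -> (r <= n - 1)%N ->
  [/\ (forall c : 'I_m -> K, eval_sc p c = 0),
      ((2 <= r)%N ->
         (forall k : nat, (1 <= k <= r - 1)%N ->
            forall (idx : k.-tuple 'I_m) (z : 'I_k.+1 -> 'I_m -> K),
              pcoef p idx z = 0)
         /\ (forall A : 'I_m -> 'M[K]_n, (forall i, upper_tri (A i)) ->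
               in_Tn_t (r - 1) (eval_mx p A)))
    & exists (idx : r.-tuple 'I_m) (z : 'I_r.+1 -> 'I_m -> K),
        pcoef p idx z != 0].
Proof.
move=> _ _ _ Hord Hr _.
case: Hord => [[Hr0 _]|[_ HPI HnPI _]]; first by rewrite Hr0 in Hr.
have Hsmall : forall idx zz, (size idx <= r - 1)%N -> Fp p idx zz = 0.
  by move=> idx zz Hs; apply: Fp_small HPI _; lia.
split.
- by move=> c; rewrite -(Fp_nil p (fun _ => c)); apply: Hsmall.
- move=> _; split.
    move=> k /andP [Hk1 Hk2] idx z.
    by apply: (Fp_small _ HPI); rewrite size_tuple; lia.
  move=> A HA; split; first exact: eval_ut.
  move=> i j Hij; case: (ltnP j i) => Hji; first exact: eval_ut.
  exact: (vanish HA Hsmall).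
- apply: NNPP => Hn; apply: HnPI => A HA.
  apply/matrixP => s t; rewrite mxE.
  case: (ltnP t s) => Hts; first exact: eval_ut.
  apply: (@vanish _ _ _ r _ _ HA) => //; last by have := ltn_ord t; lia.
  move=> idx zz Hsz.
  case: (ltnP (size idx) r) => Hlt; first exact: Fp_small HPI Hlt.
  have Hsr : size idx == r by rewrite eqn_leq Hsz Hlt.
  case: (eqVneq (pcoef p (Tuple Hsr) (fun j => zz j)) 0) => Hc; last first.
    by exfalso; apply: Hn; exists (Tuple Hsr), (fun j => zz j).
  rewrite -Hc /pcoef; apply: Fp_ext => /= t' Ht'.
  by rewrite inordK //; rewrite ltnS (eqP Hsr) in Ht' *.
Qed.
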